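(* Let $S\subseteq[0,1]$ be the Smith–Volterra–Cantor set $\mathrm{SVC}(4)$ and let $f\colon[0,1]\to\mathbb{R}$ be the function defined from it as in the context. Then $f$ is not differentiable at any point of $S$.
   Context: Construction of $S$: let $S_0=[0,1]$. If $S_{n-1}=\bigcup_k[a_k,b_k]$ (finite disjoint union of closed ''component intervals'') for $n\geqslant1$, put $S_n=\bigcup_k\left(\left[a_k,\frac{a_k+b_k}{2}-\frac{1}{2^{2n+1}}\right]\cup\left[\frac{a_k+b_k}{2}+\frac{1}{2^{2n+1}},b_k\right]\right)$, i.e. an open interval of length $1/4^n$ centred at the midpoint is removed from each component interval. Let $S=\bigcap_{n\in\mathbb{N}}S_n$. The set $[0,1]\setminus S$ is a countable disjoint union of open intervals (the contiguous intervals of $S$); let $\{(a_n,b_n)\}_{n\in\mathbb{N}}$ be an enumeration of them and $c_n=(a_n+b_n)/2$. Define $f\colon[0,1]\to\mathbb{R}$ by $f=0$ on $S$, and on $(a_n,b_n)$: $f(x)=(x-a_n)^{1/4}\sin\big((x-a_n)^{-7/4}\big)$ for $a_n<x\leqslant c_n$, and $f(x)=(b_n-x)^{1/4}\sin\big((b_n-x)^{-7/4}\big)$ for $c_n\leqslant x<b_n$. (At the points $0,1$ differentiability is understood one-sidedly.) *)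

(* Defs.v *)
From Stdlib Require Import Reals Lra List ClassicalEpsilon.
Open Scope R_scope.

(* Half-length of the open interval removed at stage n (n >= 1): the removed
   interval has length 1/4^n, i.e. half-length 1/2^(2n+1). *)
Definition half_gap (n : nat) : R := / 2 ^ (2 * n + 1).

Definition midpt (p : R * R) : R := (fst p + snd p) / 2.

Definition split_comp (n : nat) (p : R * R) : list (R * R) :=
  (fst p, midpt p - half_gap n) :: (midpt p + half_gap n, snd p) :: nil.

Fixpoint comps (n : nat) : list (R * R) :=
  match n with
  | O => (0, 1) :: nil
  | S m => flat_map (split_comp (S m)) (comps m)
  end.

Definition in_Sn (n : nat) (x : R) : Prop :=
  exists p, In p (comps n) /\ fst p <= x <= snd p.

Definition in_S (x : R) : Prop := forall n, in_Sn n x.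

(* Contiguous intervals of S: the open intervals removed at some stage n >= 1
   from a component interval of S_(n-1).  p = (a_n, b_n). *)
Definition contiguous (p : R * R) : Prop :=
  exists n q, In q (comps n) /\
    fst p = midpt q - half_gap (S n) /\ snd p = midpt q + half_gap (S n).

Definition f_piece (a b x : R) : R :=
  if Rle_dec x ((a + b) / 2)
  then Rpower (x - a) (1 / 4) * sin (Rpower (x - a) (- (7 / 4)))
  else Rpower (b - x) (1 / 4) * sin (Rpower (b - x) (- (7 / 4))).

(* svc_f : 0 on S (and, irrelevantly, outside [0,1]); on a contiguous interval
   (a,b) (these are pairwise disjoint, so the choice is unique) the formula. *)
Definition svc_f (x : R) : R :=
  match excluded_middle_informative
          (exists p : R * R, contiguous p /\ fst p < x < snd p) with
  | left H =>
      let p := proj1_sig (constructive_indefinite_description _ H) in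
      f_piece (fst p) (snd p) x
  | right _ => 0
  end.

(* Differentiability of g : [0,1] -> R at x, relative to [0,1]
   (one-sided at the endpoints 0 and 1). *)
Definition differentiable_on01_at (g : R -> R) (x : R) : Prop :=
  exists l : R, forall eps : R, 0 < eps -> exists delta : R, 0 < delta /\
    forall y : R, 0 <= y <= 1 -> y <> x -> Rabs (y - x) < delta ->
      Rabs ((g y - g x) / (y - x) - l) < eps.

(* Main.v *)
Require Import Defs.
From Stdlib Require Import Reals Lra Lia List ZArith ClassicalEpsilon.
Open Scope R_scope.

Definition Ln (n : nat) : R := (2 ^ n + 1) / 2 ^ (2 * n + 1).

Lemma pow2_pos n : 0 < 2 ^ n.
Proof. apply pow_lt; lra. Qed.

Lemma Ln_pos n : 0 < Ln n.
Proof. unfold Ln. pose proof (pow2_pos n). pose proof (pow2_pos (2*n+1)).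
  apply Rdiv_lt_0_compat; lra. Qed.

Lemma pow_2n1 n : 2 ^ (2 * n + 1) = 2 * (2 ^ n) ^ 2.
Proof. rewrite pow_add, <- pow_mult. replace (2*n)%nat with (n*2)%nat by lia. simpl; ring. Qed.

Lemma Ln_step n : Ln n / 2 - half_gap (S n) = Ln (S n).
Proof. unfold Ln, half_gap. rewrite !pow_2n1. simpl pow. pose proof (pow2_pos n).
  field. lra. Qed.

Lemma half_gap_pos n : 0 < half_gap n.
Proof. unfold half_gap. apply Rinv_0_lt_compat, pow2_pos. Qed.

Lemma comps_inv : forall n q, In q (comps n) ->
  0 <= fst q /\ snd q <= 1 /\ snd q - fst q = Ln n.
Proof.
  induction n as [|n IH]; intros q Hq.
  - simpl in Hq. destruct Hq as [<-|[]]. unfold Ln; simpl; lra.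
  - simpl comps in Hq. apply in_flat_map in Hq. destruct Hq as [q0 [H0 Hs]].
    destruct (IH q0 H0) as (A & B & C).
    pose proof (Ln_step n) as E. pose proof (Ln_pos (S n)). pose proof (half_gap_pos (S n)).
    unfold split_comp, midpt in Hs. simpl in Hs.
    destruct Hs as [<-|[<-|[]]]; simpl; lra.
Qed.

Fixpoint ordered (lo : R) (l : list (R * R)) : Prop :=
  match l with
  | nil => True
  | q :: l' => lo < fst q /\ fst q <= snd q /\ ordered (snd q) l'
  end.

Lemma ordered_in : forall l lo q, ordered lo l -> In q l -> lo < fst q /\ fst q <= snd q.
Proof.
  induction l as [|q0 l IH]; intros lo q Ho Hq; simpl in *; [contradiction|].
  destruct Ho as (A & B & C). destruct Hq as [<-|Hq]; [lra|].
  destruct (IH _ _ C Hq); lra.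
Qed.

Lemma ordered_disj : forall l lo q q' y, ordered lo l -> In q l -> In q' l ->
  fst q <= y <= snd q -> fst q' <= y <= snd q' -> q = q'.
Proof.
  induction l as [|q0 l IH]; intros lo q q' y Ho Hq Hq' Hy Hy'; simpl in *; [contradiction|].
  destruct Ho as (A & B & C).
  destruct Hq as [<-|Hq]; destruct Hq' as [<-|Hq']; auto.
  - destruct (ordered_in _ _ _ C Hq'); lra.
  - destruct (ordered_in _ _ _ C Hq); lra.
  - eauto.
Qed.

Lemma ordered_flat : forall n l lo, (forall q, In q l -> snd q - fst q = Ln n) ->
  ordered lo l -> ordered lo (flat_map (split_comp (S n)) l).
Proof.
  intros n l; induction l as [|q l IH]; intros lo Hl Ho; simpl in *; auto.
  destruct Ho as (A & B & C).
  pose proof (Hl q (or_introl eq_refl)) as E.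
  pose proof (Ln_step n). pose proof (Ln_pos (S n)). pose proof (half_gap_pos (S n)).
  unfold midpt. simpl.
  repeat split; try lra. apply IH; auto.
Qed.

Lemma comps_ordered n : ordered (-1) (comps n).
Proof.
  induction n as [|n IH].
  - simpl; lra.
  - simpl comps. apply ordered_flat; auto. intros q Hq; apply (comps_inv n q Hq).
Qed.

Lemma comps_disj n q q' y : In q (comps n) -> In q' (comps n) ->
  fst q <= y <= snd q -> fst q' <= y <= snd q' -> q = q'.
Proof. intros; eapply ordered_disj; eauto using comps_ordered. Qed.

Lemma Sn_mono n y : in_Sn (S n) y -> in_Sn n y.
Proof.
  intros [q [Hq Hy]]. simpl comps in Hq. apply in_flat_map in Hq.
  destruct Hq as [q0 [H0 Hs]]. exists q0; split; auto.
  destruct (comps_inv n q0 H0) as (A & B & C).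
  pose proof (Ln_step n). pose proof (Ln_pos (S n)). pose proof (half_gap_pos (S n)).
  unfold split_comp, midpt in Hs. simpl in Hs.
  destruct Hs as [<-|[<-|[]]]; simpl in *; lra.
Qed.

Lemma Sn_mono_le m n y : (m <= n)%nat -> in_Sn n y -> in_Sn m y.
Proof. induction 1; auto. intro H'; apply IHle, Sn_mono, H'. Qed.

Definition in_gap n q y := midpt q - half_gap (S n) < y < midpt q + half_gap (S n).

Lemma gap_in_q n q y : In q (comps n) -> in_gap n q y -> fst q < y < snd q.
Proof.
  intros Hq Hg. destruct (comps_inv n q Hq) as (A & B & C).
  pose proof (Ln_step n). pose proof (Ln_pos (S n)). unfold in_gap, midpt in *. lra.
Qed.

Lemma gap_not_S n q y : In q (comps n) -> in_gap n q y -> ~ in_Sn (S n) y.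
Proof.
  intros Hq Hg [r [Hr Hy]]. pose proof (gap_in_q n q y Hq Hg).
  simpl comps in Hr. apply in_flat_map in Hr.
  destruct Hr as [q0 [H0 Hs]].
  destruct (comps_inv n q0 H0) as (A & B & C).
  pose proof (Ln_step n). pose proof (Ln_pos (S n)). pose proof (half_gap_pos (S n)).
  assert (fst q0 <= y <= snd q0).
  { unfold split_comp, midpt in Hs. simpl in Hs.
    destruct Hs as [<-|[<-|[]]]; simpl in *; lra. }
  assert (q0 = q) by (apply (comps_disj n q0 q y); auto; lra). subst q0.
  unfold in_gap, split_comp, midpt in *. simpl in Hs.
  destruct Hs as [<-|[<-|[]]]; simpl in *; lra.
Qed.

Lemma contiguous_unique n q y p : In q (comps n) -> in_gap n q y ->
  contiguous p -> fst p < y < snd p ->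
  p = (midpt q - half_gap (S n), midpt q + half_gap (S n)).
Proof.
  intros Hq Hg [m [q' [Hq' [E1 E2]]]] Hy.
  assert (Hg' : in_gap m q' y) by (unfold in_gap; lra).
  pose proof (gap_in_q _ _ _ Hq Hg). pose proof (gap_in_q _ _ _ Hq' Hg').
  pose proof (gap_not_S _ _ _ Hq Hg). pose proof (gap_not_S _ _ _ Hq' Hg').
  assert (In1 : in_Sn n y) by (exists q; split; auto; lra).
  assert (In2 : in_Sn m y) by (exists q'; split; auto; lra).
  destruct (lt_eq_lt_dec m n) as [[Hlt|<-]|Hlt].
  - exfalso. apply H2. apply (Sn_mono_le (S m) n); auto.
  - assert (q' = q) by (apply (comps_disj m q' q y); auto; lra). subst q'.
    destruct p; simpl in *; subst; auto.
  - exfalso. apply H1. apply (Sn_mono_le (S n) m); auto.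
Qed.

Lemma svc_f_gap n q y : In q (comps n) -> in_gap n q y ->
  svc_f y = f_piece (midpt q - half_gap (S n)) (midpt q + half_gap (S n)) y.
Proof.
  intros Hq Hg. unfold svc_f.
  destruct (excluded_middle_informative _) as [e|ne].
  - destruct (constructive_indefinite_description _ e) as [p [Hc Hy]]. simpl.
    rewrite (contiguous_unique n q y p Hq Hg Hc Hy). reflexivity.
  - exfalso. apply ne. exists (midpt q - half_gap (S n), midpt q + half_gap (S n)).
    split; [|exact Hg]. exists n, q; simpl; auto.
Qed.

Lemma svc_f_S x : in_S x -> svc_f x = 0.
Proof.
  intros HS. unfold svc_f.
  destruct (excluded_middle_informative _) as [[p [[m [q [Hq [E1 E2]]]] Hy]]|ne]; auto.
  exfalso. apply (gap_not_S m q x Hq); [unfold in_gap; lra|]. apply HS.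
Qed.

Lemma Rpower_inv_exp s : 0 < s -> Rpower (Rpower s (-(4/7))) (-(7/4)) = s.
Proof. intros Hs. rewrite Rpower_mult. replace (-(4/7) * -(7/4)) with 1 by field.
  apply Rpower_1; auto. Qed.

Lemma Rpower_dec s1 s2 : 0 < s1 < s2 -> Rpower s2 (-(4/7)) < Rpower s1 (-(4/7)).
Proof. intros H. rewrite !Rpower_Ropp. apply Rinv_lt_contravar.
  - apply Rmult_lt_0_compat; unfold Rpower; apply exp_pos.
  - apply Rlt_Rpower_l; lra. Qed.

Lemma Rpower_dec_le s1 s2 : 0 < s1 <= s2 -> Rpower s2 (-(4/7)) <= Rpower s1 (-(4/7)).
Proof. intros H. destruct (Req_dec s1 s2) as [<-|]; [lra|]. left; apply Rpower_dec; lra. Qed.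

Lemma pick_t h : 0 < h <= / 16 -> exists t0 t1,
  0 < t0 < h /\ 0 < t1 < h /\ h / 2 <= t1 /\
  sin (Rpower t0 (-(7/4))) = 0 /\ sin (Rpower t1 (-(7/4))) = 1.
Proof.
  intros Hh. set (A := Rpower h (-(7/4))).
  assert (HA : 16 <= A).
  { unfold A.
    assert (E : Rpower h (-(7/4)) = Rpower (/h) (7/4)).
    { rewrite Rpower_Ropp. unfold Rpower. rewrite ln_Rinv by lra.
      rewrite <- exp_Ropp. f_equal. ring. }
    rewrite E. assert (16 <= / h).
    { replace 16 with (/ / 16) by field. apply Rinv_le_contravar; lra. }
    apply Rle_trans with (Rpower (/h) 1). rewrite Rpower_1; lra.
    apply Rle_Rpower; lra. }
  assert (HAh : Rpower A (-(4/7)) = h).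
  { unfold A. rewrite Rpower_mult. replace (-(7/4) * -(4/7)) with 1 by field.
    apply Rpower_1; lra. }
  pose proof PI_RGT_0 as Hpi. pose proof PI_4 as Hpi4.
  set (s0 := IZR (up (A / PI)) * PI).
  destruct (archimed (A / PI)) as [u1 u2].
  assert (Hs0 : A < s0 <= A + PI).
  { unfold s0. split.
    - apply Rmult_lt_compat_r with (r := PI) in u1; auto.
      unfold Rdiv in u1. rewrite Rmult_assoc, Rinv_l, Rmult_1_r in u1; lra.
    - apply Rmult_le_compat_r with (r := PI) in u2; [|lra].
      unfold Rdiv in u2. rewrite Rmult_minus_distr_r, Rmult_assoc, Rinv_l, Rmult_1_r in u2; lra. }
  set (z := up (A / (2 * PI))).
  destruct (archimed (A / (2 * PI))) as [v1 v2]. fold z in v1, v2.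
  assert (Hz : A < 2 * IZR z * PI <= A + 2 * PI).
  { split.
    - apply Rmult_lt_compat_r with (r := 2 * PI) in v1; [|lra].
      unfold Rdiv in v1. rewrite Rmult_assoc, Rinv_l, Rmult_1_r in v1; lra.
    - apply Rmult_le_compat_r with (r := 2 * PI) in v2; [|lra].
      unfold Rdiv in v2. rewrite Rmult_minus_distr_r, Rmult_assoc, Rinv_l, Rmult_1_r in v2; lra. }
  assert (Hzpos : (0 <= z)%Z).
  { apply le_IZR. assert (0 < A / (2*PI)) by (apply Rdiv_lt_0_compat; lra). lra. }
  set (s1 := PI / 2 + 2 * IZR z * PI).
  assert (Hsin1 : sin s1 = 1).
  { unfold s1. rewrite <- (Z2Nat.id z Hzpos), <- INR_IZR_INZ. rewrite sin_period. apply sin_PI2. }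
  assert (Hs1 : A < s1 <= A + 16) by (unfold s1; lra).
  exists (Rpower s0 (-(4/7))), (Rpower s1 (-(4/7))).
  assert (P0 : 0 < Rpower s0 (-(4/7))) by (unfold Rpower; apply exp_pos).
  assert (P1 : 0 < Rpower s1 (-(4/7))) by (unfold Rpower; apply exp_pos).
  rewrite !Rpower_inv_exp by lra.
  repeat split; auto.
  - rewrite <- HAh. apply Rpower_dec; lra.
  - rewrite <- HAh. apply Rpower_dec; lra.
  - apply Rle_trans with (Rpower (2 * A) (-(4/7))).
    + rewrite <- Rpower_mult_distr by lra. rewrite HAh.
      assert (/2 <= Rpower 2 (-(4/7))).
      { apply Rle_trans with (Rpower 2 (-1)).
        - replace (-1) with (-(1)) by ring. rewrite Rpower_Ropp, Rpower_1; lra.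
        - apply Rle_Rpower; lra. }
      nra.
    + apply Rpower_dec_le; lra.
  - apply sin_eq_0_1. exists (up (A / PI)). reflexivity.
Qed.

Lemma claim n q x t : In q (comps n) -> fst q <= x <= snd q -> ~ in_gap n q x ->
  0 < t < half_gap (S n) ->
  exists y, 0 <= y <= 1 /\ y <> x /\ Rabs (y - x) <= Ln n /\
    svc_f y = Rpower t (1/4) * sin (Rpower t (-(7/4))).
Proof.
  intros Hq Hx Hng Ht.
  destruct (comps_inv n q Hq) as (A & B & C).
  set (m := midpt q). set (h := half_gap (S n)). fold h in Ht.
  assert (Hside : x <= m - h \/ m + h <= x).
  { unfold in_gap in Hng. fold m h in Hng. lra. }
  assert (Hgen : forall y, in_gap n q y -> 0 <= y <= 1 /\ y <> x /\ Rabs (y - x) <= Ln n).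
  { intros y Hy. pose proof (gap_in_q n q y Hq Hy). split; [lra|]. split.
    - intro E; subst y. contradiction.
    - apply Rabs_le. lra. }
  destruct Hside as [Hs|Hs].
  - exists (m - h + t).
    assert (Hg : in_gap n q (m - h + t)) by (unfold in_gap; fold m h; lra).
    destruct (Hgen _ Hg) as (G1 & G2 & G3). repeat split; auto; try lra.
    rewrite (svc_f_gap n q _ Hq Hg). fold m h. unfold f_piece.
    destruct (Rle_dec _ _) as [_|Hn].
    + replace (m - h + t - (m - h)) with t by ring. reflexivity.
    + exfalso; apply Hn; lra.
  - exists (m + h - t).
    assert (Hg : in_gap n q (m + h - t)) by (unfold in_gap; fold m h; lra).
    destruct (Hgen _ Hg) as (G1 & G2 & G3). repeat split; auto; try lra.
    rewrite (svc_f_gap n q _ Hq Hg). fold m h. unfold f_piece.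
    destruct (Rle_dec _ _) as [Hn|_].
    + exfalso; lra.
    + replace (m + h - (m + h - t)) with t by ring. reflexivity.
Qed.

Theorem theorem4p4 : forall x : R, in_S x -> ~ differentiable_on01_at svc_f x.
Proof.
  intros x HS [l Hl].
  destruct (Hl 1 Rlt_0_1) as [d [Hd Hd']].
  assert (Hr : 0 < Rmin (d/2) (/64)) by (apply Rmin_pos; lra).
  destruct (pow_lt_1_zero (/2) ltac:(rewrite Rabs_pos_eq; lra) _ Hr) as [n Hn].
  specialize (Hn n (le_n n)). rewrite pow_inv in Hn.
  set (u := / 2 ^ n) in Hn.
  pose proof (pow2_pos n) as P2.
  assert (Hu0 : 0 < u) by (apply Rinv_0_lt_compat; auto).
  rewrite Rabs_pos_eq in Hn by lra.
  assert (Hu1 : u < d / 2) by (pose proof (Rmin_l (d/2) (/64)); lra).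
  assert (Hu2 : u < / 64) by (pose proof (Rmin_r (d/2) (/64)); lra).
  assert (HL : Ln n = u / 2 + u ^ 2 / 2).
  { unfold Ln, u. rewrite pow_2n1. field. lra. }
  assert (Lu : Ln n <= u) by (rewrite HL; simpl; nra).
  assert (Hh : half_gap (S n) = u ^ 2 / 8).
  { unfold half_gap, u. rewrite pow_2n1. simpl pow. field. lra. }
  destruct (HS n) as [q [Hq Hxq]].
  assert (Hng : ~ in_gap n q x).
  { intro G. apply (gap_not_S n q x Hq G). apply HS. }
  destruct (pick_t (half_gap (S n))) as [t0 [t1 (T0 & T1 & T2 & S0 & S1)]].
  { rewrite Hh. split; nra. }
  assert (Sx : svc_f x = 0) by (apply svc_f_S; auto).
  destruct (claim n q x t0 Hq Hxq Hng T0) as [y0 (Y1 & Y2 & Y3 & Y4)].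
  destruct (claim n q x t1 Hq Hxq Hng T1) as [y1 (Z1 & Z2 & Z3 & Z4)].
  assert (Hl0 : Rabs l < 1).
  { specialize (Hd' y0 Y1 Y2 ltac:(lra)). rewrite Y4, S0, Sx in Hd'.
    replace ((Rpower t0 (1 / 4) * 0 - 0) / (y0 - x) - l) with (- l) in Hd'
      by (field; lra). rewrite Rabs_Ropp in Hd'. exact Hd'. }
  specialize (Hd' y1 Z1 Z2 ltac:(lra)). rewrite Z4, S1, Sx in Hd'.
  set (P := Rpower t1 (1/4)) in Hd'.
  set (c := 2 * Ln n).
  assert (Hc0 : 0 < c) by (unfold c; pose proof (Ln_pos n); lra).
  assert (Hcu : c <= 2 * u) by (unfold c; lra).
  assert (HP : c < P).
  { assert (c ^ 4 < half_gap (S n) / 2).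
    { rewrite Hh. assert (c ^ 4 <= (2 * u) ^ 4) by (apply pow_incr; lra).
      assert (u ^ 2 < / 4096) by nra. nra. }
    apply Rlt_le_trans with (Rpower (half_gap (S n) / 2) (1/4)).
    - replace c with (Rpower (c ^ 4) (1/4)) at 1.
      + apply Rlt_Rpower_l; [lra|]. split; [apply pow_lt; lra|auto].
      + rewrite <- (Rpower_pow 4 c) by lra. rewrite Rpower_mult.
        replace (INR 4 * (1/4)) with 1 by (simpl; field). apply Rpower_1; lra.
    - unfold P. apply Rle_Rpower_l; [lra|]. pose proof (half_gap_pos (S n)); lra. }
  set (D := y1 - x) in *.
  assert (HD : D <> 0) by (unfold D; lra).
  replace ((P * 1 - 0) / D - l) with (P / D - l) in Hd' by (field; auto).
  assert (HQ : Rabs (P / D) < 2).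
  { pose proof (Rabs_triang (P / D - l) l).
    replace (P / D - l + l) with (P / D) in H by ring. lra. }
  assert (Rabs D * (P / Rabs D) = P) by (field; apply Rabs_no_R0; auto).
  assert (Rabs (P / D) = P / Rabs D).
  { unfold Rdiv. rewrite Rabs_mult, Rabs_inv, Rabs_pos_eq; auto. lra. }
  assert (0 < Rabs D) by (apply Rabs_pos_lt; auto).
  assert (Rabs D * (P / Rabs D) < Rabs D * 2) by (apply Rmult_lt_compat_l; lra).
  unfold c in HP. lra.
Qed.
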